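(* Let $\left|\psi\right\rangle\in\mathbb{C}^{d_A}\otimes\mathbb{C}^{d_B}$ be a pure bipartite state and let $\rho_A=\mathrm{Tr}_B\left|\psi\right\rangle\left\langle\psi\right|$. Then $$E_{MB}(\left|\psi\right\rangle)=S(\rho_A)=-\mathrm{Tr}(\rho_A\log_2\rho_A),$$ i.e. the entanglement measurement bound of a bipartite pure state equals its entanglement entropy. Moreover, for every orthonormal basis $\{|c^k\rangle\}$ of $\mathbb{C}^{d_A}$, the Alice-outcome distribution $p_k=\langle c^k|\rho_A|c^k\rangle$ satisfies $-\sum_k p_k\log_2 p_k\ge S(\rho_A)$, with equality when $\{|c^k\rangle\}$ is an eigenbasis of $\rho_A$.
   Context: Entanglement measurement bound (EMB). Let $\left|\psi\right\rangle$ be a unit vector in $\mathcal{H}_1\otimes\cdots\otimes\mathcal{H}_N$, $\mathcal{H}_j=\mathbb{C}^{d_j}$. An adaptive local measurement scheme consists of: an ordering $\pi$ of the parties $\{1,\dots,N\}$; an orthonormal basis $\{|\phi^{(1)}_{i_1}\rangle\}_{i_1}$ of $\mathcal{H}_{\pi(1)}$; and, for each $k=2,\dots,N$ and each outcome history $(i_1,\dots,i_{k-1})$, an orthonormal basis $\{|\phi^{(k)}_{i_k|i_1\dots i_{k-1}}\rangle\}_{i_k}$ of $\mathcal{H}_{\pi(k)}$ (which may depend on the history). Its outcome distribution is $p_{i_1\dots i_N}=\big|\big(\langle\phi^{(1)}_{i_1}|\otimes\langle\phi^{(2)}_{i_2|i_1}|\otimes\cdots\otimes\langle\phi^{(N)}_{i_N|i_1\dots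 i_{N-1}}|\big)\left|\psi\right\rangle\big|^2$, where the $k$-th bra acts on the tensor factor of party $\pi(k)$. The EMB is $E_{MB}(\left|\psi\right\rangle)=\min H(\mathbf{p})$, where $H(\mathbf{p})=-\sum p_{i_1\dots i_N}\log_2 p_{i_1\dots i_N}$ is the Shannon entropy and the minimum is over all adaptive local measurement schemes (including all orderings of the parties). *)

(* Defs.v *)
From Stdlib Require Import Reals.
Open Scope R_scope.

Record Cpx := mkC { Re : R; Im : R }.
Definition C0 : Cpx := mkC 0 0.
Definition RtoC (r : R) : Cpx := mkC r 0.
Definition Cadd (x y : Cpx) : Cpx := mkC (Re x + Re y) (Im x + Im y).
Definition Cmul (x y : Cpx) : Cpx :=
  mkC (Re x * Re y - Im x * Im y) (Re x * Im y + Im x * Re y).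
Definition Cconj (x : Cpx) : Cpx := mkC (Re x) (- Im x).
Definition Cnorm2 (x : Cpx) : R := Re x * Re x + Im x * Im x.

Fixpoint sumR (n : nat) (f : nat -> R) : R :=
  match n with O => 0 | S m => sumR m f + f m end.
Fixpoint sumC (n : nat) (f : nat -> Cpx) : Cpx :=
  match n with O => C0 | S m => Cadd (sumC m f) (f m) end.

(* ---------- vectors in C^d (components with index < d are relevant) ---------- *)
Definition vec := nat -> Cpx.

Definition inner (d : nat) (u v : vec) : Cpx :=
  sumC d (fun i => Cmul (Cconj (u i)) (v i)).

Definition orthonormal_basis (d : nat) (e : nat -> vec) : Prop :=
  forall k l, (k < d)%nat -> (l < d)%nat ->
    inner d (e k) (e l) = (if Nat.eqb k l then RtoC 1 else C0).

Definition log2 (x : R) : R := ln x / ln 2.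
(* x log2 x with the convention 0 log 0 = 0 *)
Definition xlog2 (x : R) : R := if Rle_dec x 0 then 0 else x * log2 x.

Definition shannon (d : nat) (p : nat -> R) : R := - sumR d (fun k => xlog2 (p k)).

(* psi a b = coefficient of |a> (x) |b>, a < dA, b < dB *)
Definition unit_state (dA dB : nat) (psi : nat -> nat -> Cpx) : Prop :=
  sumR dA (fun a => sumR dB (fun b => Cnorm2 (psi a b))) = 1.

(* (<u| (x) <v|) |psi>, u acting on A, v acting on B *)
Definition amp (dA dB : nat) (psi : nat -> nat -> Cpx) (u v : vec) : Cpx :=
  sumC dA (fun a => sumC dB (fun b =>
    Cmul (Cmul (Cconj (u a)) (Cconj (v b))) (psi a b))).

(* Adaptive local measurement schemes for N = 2 parties: the two orderings. *)
Inductive scheme2 : Type :=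
  (* A measured first in basis phi; then B in basis chi i, depending on A's outcome i *)
  | AFirst (phi : nat -> vec) (chi : nat -> nat -> vec)
  (* B measured first in basis chi; then A in basis phi j, depending on B's outcome j *)
  | BFirst (chi : nat -> vec) (phi : nat -> nat -> vec).

Definition valid_scheme (dA dB : nat) (s : scheme2) : Prop :=
  match s with
  | AFirst phi chi =>
      orthonormal_basis dA phi /\ forall i, (i < dA)%nat -> orthonormal_basis dB (chi i)
  | BFirst chi phi =>
      orthonormal_basis dB chi /\ forall j, (j < dB)%nat -> orthonormal_basis dA (phi j)
  end.

Definition scheme_entropy (dA dB : nat) (psi : nat -> nat -> Cpx) (s : scheme2) : R :=
  match s with
  | AFirst phi chi =>
      - sumR dA (fun i => sumR dB (fun j =>
          xlog2 (Cnorm2 (amp dA dB psi (phi i) (chi i j)))))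
  | BFirst chi phi =>
      - sumR dB (fun j => sumR dA (fun i =>
          xlog2 (Cnorm2 (amp dA dB psi (phi j i) (chi j)))))
  end.

(* v is E_MB(psi): v is the minimum of H(p) over all adaptive local schemes *)
Definition is_EMB (dA dB : nat) (psi : nat -> nat -> Cpx) (v : R) : Prop :=
  (exists s, valid_scheme dA dB s /\ scheme_entropy dA dB psi s = v) /\
  (forall s, valid_scheme dA dB s -> v <= scheme_entropy dA dB psi s).

(* rho_A = Tr_B |psi><psi| : (rho_A)_{a a'} = sum_b psi_{a b} conj(psi_{a' b}) *)
Definition rhoA (dB : nat) (psi : nat -> nat -> Cpx) (a a' : nat) : Cpx :=
  sumC dB (fun b => Cmul (psi a b) (Cconj (psi a' b))).

Definition matvec (d : nat) (M : nat -> nat -> Cpx) (v : vec) : vec :=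
  fun i => sumC d (fun j => Cmul (M i j) (v j)).

Definition is_eigenbasis (d : nat) (M : nat -> nat -> Cpx) (e : nat -> vec) (lam : nat -> R) : Prop :=
  orthonormal_basis d e /\
  forall k i, (k < d)%nat -> (i < d)%nat -> matvec d M (e k) i = Cmul (RtoC (lam k)) (e k i).

(* S(rho) = -Tr(rho log2 rho) = - sum_k lam_k log2 lam_k, lam the spectrum of rho *)
Definition vN_entropy_of_spectrum (d : nat) (lam : nat -> R) : R :=
  - sumR d (fun k => xlog2 (lam k)).

Definition alice_dist (dA dB : nat) (psi : nat -> nat -> Cpx) (c : nat -> vec) (k : nat) : R :=
  Re (inner dA (c k) (matvec dA (rhoA dB psi) (c k))).

(* Main.v *)
Require Import Defs.
From Stdlib Require Import Reals Lra Lia ClassicalEpsilon FunctionalExtensionality.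
From HB Require Import structures.
From mathcomp Require ssreflect ssrfun ssrbool eqtype ssrnat seq choice fintype bigop ssralg matrix.
Open Scope R_scope.

Lemma Cext (x y : Cpx) : Re x = Re y -> Im x = Im y -> x = y.
Proof. destruct x, y; simpl; intros; subst; reflexivity. Qed.
Ltac Csolve := apply Cext; simpl; ring.

Lemma sumR_ext n f g : (forall i, (i < n)%nat -> f i = g i) -> sumR n f = sumR n g.
Proof. induction n; simpl; intros H; [reflexivity|]. rewrite IHn, H; auto; intros; apply H; lia. Qed.
Lemma sumC_ext n f g : (forall i, (i < n)%nat -> f i = g i) -> sumC n f = sumC n g.
Proof. induction n; simpl; intros H; [reflexivity|]. rewrite IHn, H; auto; intros; apply H; lia. Qed.
Lemma sumR_add n f g : sumR n (fun i => f i + g i) = sumR n f + sumR n g.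
Proof. induction n; simpl; [ring|]. rewrite IHn; ring. Qed.
Lemma sumR_scal n c f : c * sumR n f = sumR n (fun i => c * f i).
Proof. induction n; simpl; [ring|]. rewrite <- IHn; ring. Qed.
Lemma sumR_swap n m (f : nat -> nat -> R) :
  sumR n (fun i => sumR m (f i)) = sumR m (fun j => sumR n (fun i => f i j)).
Proof.
  induction n; simpl. { induction m; simpl; [reflexivity|]. rewrite <- IHm; ring. }
  rewrite IHn, <- sumR_add. reflexivity.
Qed.
Lemma sumR_le n f g : (forall i, (i < n)%nat -> f i <= g i) -> sumR n f <= sumR n g.
Proof. induction n; simpl; intros H; [lra|]. apply Rplus_le_compat; [apply IHn; intros; apply H; lia| apply H; lia]. Qed.
Lemma sumR_nonneg n f : (forall i, (i < n)%nat -> 0 <= f i) -> 0 <= sumR n f.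
Proof. intros H. replace 0 with (sumR n (fun _ => 0)). apply sumR_le; auto.
  induction n; simpl; auto. rewrite IHn; [ring|intros; apply H; lia]. Qed.
Lemma sumR_zero n : sumR n (fun _ => 0) = 0.
Proof. induction n; simpl; auto. rewrite IHn; ring. Qed.
Lemma sumR_nonneg_zero n f : (forall i, (i < n)%nat -> 0 <= f i) -> sumR n f = 0 ->
  forall i, (i < n)%nat -> f i = 0.
Proof.
  induction n; simpl; intros H S i Hi; [lia|].
  assert (0 <= sumR n f) by (apply sumR_nonneg; intros; apply H; lia).
  assert (0 <= f n) by (apply H; lia).
  destruct (Nat.eq_dec i n). subst; lra.
  apply IHn; [intros; apply H; lia|lra|lia].
Qed.
Lemma sumR_single n f j : (j < n)%nat -> (forall i, (i < n)%nat -> i <> j -> f i = 0) -> sumR n f = f j.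
Proof.
  induction n; simpl; intros Hj H; [lia|].
  destruct (Nat.eq_dec j n).
  - subst. assert (E : sumR n f = sumR n (fun _ => 0)) by (apply sumR_ext; intros; apply H; lia).
    rewrite E, sumR_zero; ring.
  - rewrite (H n) by lia. rewrite IHn; [ring|lia|]. intros; apply H; lia.
Qed.

Lemma sumC_add n f g : sumC n (fun i => Cadd (f i) (g i)) = Cadd (sumC n f) (sumC n g).
Proof. induction n; simpl; [Csolve|]. rewrite IHn. Csolve. Qed.
Lemma sumC_mull n c f : Cmul c (sumC n f) = sumC n (fun i => Cmul c (f i)).
Proof. induction n; simpl; [Csolve|]. rewrite <- IHn. Csolve. Qed.
Lemma sumC_mulr n c f : Cmul (sumC n f) c = sumC n (fun i => Cmul (f i) c).
Proof. induction n; simpl; [Csolve|]. rewrite <- IHn. Csolve. Qed.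
Lemma sumC_zero n : sumC n (fun _ => C0) = C0.
Proof. induction n; simpl; auto. rewrite IHn; Csolve. Qed.
Lemma sumC_swap n m (f : nat -> nat -> Cpx) :
  sumC n (fun i => sumC m (f i)) = sumC m (fun j => sumC n (fun i => f i j)).
Proof.
  induction n; simpl. { rewrite sumC_zero. reflexivity. }
  rewrite IHn, <- sumC_add. reflexivity.
Qed.
Lemma Re_sumC n f : Re (sumC n f) = sumR n (fun i => Re (f i)).
Proof. induction n; simpl; auto. rewrite IHn; auto. Qed.
Lemma Im_sumC n f : Im (sumC n f) = sumR n (fun i => Im (f i)).
Proof. induction n; simpl; auto. rewrite IHn; auto. Qed.
Lemma Cconj_sumC n f : Cconj (sumC n f) = sumC n (fun i => Cconj (f i)).
Proof. induction n; simpl; [Csolve|]. rewrite <- IHn. Csolve. Qed.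
Lemma sumC_single n f j : (j < n)%nat -> (forall i, (i < n)%nat -> i <> j -> f i = C0) -> sumC n f = f j.
Proof.
  induction n; simpl; intros Hj H; [lia|].
  destruct (Nat.eq_dec j n).
  - subst. assert (E : sumC n f = sumC n (fun _ => C0)) by (apply sumC_ext; intros; apply H; lia).
    rewrite E, sumC_zero; Csolve.
  - rewrite (H n) by lia. rewrite IHn; [Csolve|lia|]. intros; apply H; lia.
Qed.
Lemma sumC_delta n j (x : nat -> Cpx) : (j < n)%nat ->
  sumC n (fun i => Cmul (x i) (if Nat.eqb i j then RtoC 1 else C0)) = x j.
Proof.
  intros Hj. rewrite (sumC_single _ _ j Hj).
  - rewrite Nat.eqb_refl. Csolve.
  - intros i _ Hij. apply Nat.eqb_neq in Hij. rewrite Hij. Csolve.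
Qed.
Lemma sumC_delta' n j (x : nat -> Cpx) : (j < n)%nat ->
  sumC n (fun i => Cmul (x i) (if Nat.eqb j i then RtoC 1 else C0)) = x j.
Proof.
  intros Hj. rewrite <- (sumC_delta n j x Hj). apply sumC_ext. intros i _.
  rewrite Nat.eqb_sym. reflexivity.
Qed.

Lemma Cnorm2_nonneg x : 0 <= Cnorm2 x.
Proof. unfold Cnorm2. nra. Qed.
Lemma Cnorm2_Re x : Cnorm2 x = Re (Cmul (Cconj x) x).
Proof. unfold Cnorm2; simpl; ring. Qed.
Lemma Cnorm2_conj x : Cnorm2 (Cconj x) = Cnorm2 x.
Proof. unfold Cnorm2; simpl; ring. Qed.
Lemma Cnorm2_mul x y : Cnorm2 (Cmul x y) = Cnorm2 x * Cnorm2 y.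
Proof. unfold Cnorm2; simpl; ring. Qed.
Lemma Cnorm2_zero x : Cnorm2 x = 0 -> x = C0.
Proof. unfold Cnorm2; intros; destruct x as [a b]; simpl in *.
  assert (a = 0) by nra. assert (b = 0) by nra. subst. reflexivity. Qed.

Definition norm2 n (v : vec) : R := sumR n (fun i => Cnorm2 (v i)).
Lemma norm2_inner n v : norm2 n v = Re (inner n v v).
Proof. unfold norm2, inner. rewrite Re_sumC. apply sumR_ext; intros; apply Cnorm2_Re. Qed.
Lemma norm2_nonneg n v : 0 <= norm2 n v.
Proof. apply sumR_nonneg; intros; apply Cnorm2_nonneg. Qed.

Lemma inner_conj n u v : Cconj (inner n u v) = inner n v u.
Proof. unfold inner. rewrite Cconj_sumC. apply sumC_ext; intros; Csolve. Qed.
Lemma Cnorm2_inner_sym n u v : Cnorm2 (inner n u v) = Cnorm2 (inner n v u).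
Proof. rewrite <- inner_conj, Cnorm2_conj. reflexivity. Qed.

Definition LC m (x : nat -> Cpx) (G : nat -> vec) : vec :=
  fun i => sumC m (fun k => Cmul (x k) (G k i)).
Lemma inner_LC_r n m u x G :
  inner n u (LC m x G) = sumC m (fun k => Cmul (x k) (inner n u (G k))).
Proof.
  unfold inner, LC.
  rewrite (sumC_ext n _ (fun i => sumC m (fun k => Cmul (x k) (Cmul (Cconj (u i)) (G k i))))).
  2:{ intros i _. rewrite sumC_mull. apply sumC_ext; intros; Csolve. }
  rewrite sumC_swap. apply sumC_ext; intros; rewrite sumC_mull; reflexivity.
Qed.
Lemma inner_LC_l n m v x G :
  inner n (LC m x G) v = sumC m (fun k => Cmul (Cconj (x k)) (inner n (G k) v)).
Proof.
  rewrite <- inner_conj, inner_LC_r, Cconj_sumC. apply sumC_ext; intros.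
  rewrite <- (inner_conj n v (G i)). Csolve.
Qed.

Module MC.
Import ssreflect ssrfun ssrbool eqtype ssrnat seq choice fintype bigop ssralg matrix.
Import GRing.Theory.
Local Open Scope ring_scope.

Definition Cpx_eqb (x y : Cpx) : bool :=
  if Req_EM_T (Re x) (Re y) then (if Req_EM_T (Im x) (Im y) then true else false) else false.
Lemma Cpx_eqP : Equality.axiom Cpx_eqb.
Proof.
  move=> x y; rewrite /Cpx_eqb.
  case: (Req_EM_T (Re x) (Re y)) => h1; [case: (Req_EM_T (Im x) (Im y)) => h2|].
  - by constructor; apply: Cext.
  - by constructor => h; apply: h2; rewrite h.
  - by constructor => h; apply: h1; rewrite h.
Qed.
HB.instance Definition _ := hasDecEq.Build Cpx Cpx_eqP.

Definition Cfind (P : pred Cpx) (n : nat) : option Cpx :=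
  match excluded_middle_informative (exists x, P x) with
  | left h => Some (proj1_sig (constructive_indefinite_description _ h))
  | right _ => None end.
Lemma Cfind_correct P n x : Cfind P n = Some x -> P x.
Proof.
  rewrite /Cfind; case: excluded_middle_informative => // h [] <-.
  exact: proj2_sig (constructive_indefinite_description _ h).
Qed.
Lemma Cfind_complete (P : pred Cpx) : (exists x, P x) -> exists n, Cfind P n.
Proof. move=> h; exists 0%N; rewrite /Cfind; case: excluded_middle_informative => //. Qed.
Lemma Cfind_ext (P Q : pred Cpx) : P =1 Q -> Cfind P =1 Cfind Q.
Proof. move=> h; have -> : P = Q by apply: functional_extensionality. by []. Qed.
HB.instance Definition _ := hasChoice.Build Cpx Cfind_correct Cfind_complete Cfind_ext.

Definition Copp (x : Cpx) : Cpx := mkC (- Re x) (- Im x).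
Lemma CaddA : associative Cadd.
Proof. move=> x y z; apply: Cext => /=; ring. Qed.
Lemma CaddC : commutative Cadd.
Proof. move=> x y; apply: Cext => /=; ring. Qed.
Lemma Cadd0 : left_id C0 Cadd.
Proof. move=> x; apply: Cext => /=; ring. Qed.
Lemma CaddN : left_inverse C0 Copp Cadd.
Proof. move=> x; apply: Cext => /=; ring. Qed.
HB.instance Definition _ := GRing.isZmodule.Build Cpx CaddA CaddC Cadd0 CaddN.
Lemma CmulA : associative Cmul.
Proof. move=> x y z; apply: Cext => /=; ring. Qed.
Lemma CmulC : commutative Cmul.
Proof. move=> x y; apply: Cext => /=; ring. Qed.
Lemma Cmul1 : left_id (RtoC 1) Cmul.
Proof. move=> x; apply: Cext => /=; ring. Qed.
Lemma CmulDl : left_distributive Cmul Cadd.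
Proof. move=> x y z; apply: Cext => /=; ring. Qed.
Lemma C1neq0 : RtoC 1 != C0.
Proof. apply/eqP => h. have : Re (RtoC 1) = Re C0 by rewrite h. simpl; lra. Qed.
HB.instance Definition _ := GRing.Zmodule_isComNzRing.Build Cpx CmulA CmulC Cmul1 CmulDl C1neq0.

Lemma sumC_big n f : sumC n f = \sum_(i < n) f i.
Proof.
  elim: n => [|n IH]; first by rewrite big_ord0.
  by rewrite big_ord_recr /= IH.
Qed.

Lemma completeness d (c : nat -> vec) : orthonormal_basis d c ->
  forall i j, (i < d)%coq_nat -> (j < d)%coq_nat ->
  sumC d (fun k => Cmul (c k i) (Cconj (c k j))) = if Nat.eqb i j then RtoC 1 else C0.
Proof.
  move=> Hc.
  pose A : 'M[Cpx]_d := \matrix_(k, i) Cconj (c k i).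
  pose B : 'M[Cpx]_d := \matrix_(i, k) c k i.
  have AB : A *m B = 1%:M.
    apply/matrixP => k l; rewrite !mxE.
    transitivity (inner d (c k) (c l)).
      rewrite /inner sumC_big; apply: eq_bigr => i _; rewrite !mxE //.
    rewrite (Hc k l (elimT ltP (ltn_ord k)) (elimT ltP (ltn_ord l))).
    case: (Nat.eqb_spec k l) => h.
    + have -> : k = l by apply: val_inj.
      by rewrite eqxx.
    + have -> : (k == l) = false by apply/eqP => e; apply: h; rewrite e.
      by [].
  have BA := mulmx1C AB.
  move=> i j /ltP hi /ltP hj.
  have := congr1 (fun M : 'M[Cpx]_d => M (Ordinal hi) (Ordinal hj)) BA; rewrite /= !mxE => E.
  rewrite sumC_big.
  transitivity (\sum_(k < d) B (Ordinal hi) k * A k (Ordinal hj)).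
    by apply: eq_bigr => k _; rewrite !mxE.

  case: (Nat.eqb_spec i j) => h.
  + subst j. rewrite E. have -> : Ordinal hi = Ordinal hj by apply: val_inj. by rewrite eqxx.
  + rewrite E; have -> : (Ordinal hi == Ordinal hj) = false by apply/eqP => e; apply: h; case: e.
    by [].
Qed.
End MC.
Definition completeness := MC.completeness.
Lemma sumC_prod n m f g :
  Cmul (sumC n f) (sumC m g) = sumC n (fun i => sumC m (fun j => Cmul (f i) (g j))).
Proof. rewrite sumC_mulr. apply sumC_ext; intros. rewrite sumC_mull. reflexivity. Qed.

Lemma expansion d e v i : orthonormal_basis d e -> (i < d)%nat ->
  v i = sumC d (fun k => Cmul (inner d (e k) v) (e k i)).
Proof.
  intros He Hi. unfold inner.
  rewrite (sumC_ext d _ (fun k => sumC d (fun j => Cmul (v j) (Cmul (e k i) (Cconj (e k j)))))).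
  2:{ intros k _. rewrite sumC_mulr. apply sumC_ext; intros; Csolve. }
  rewrite sumC_swap.
  rewrite (sumC_ext d _ (fun j => Cmul (v j) (if Nat.eqb i j then RtoC 1 else C0))).
  - rewrite sumC_delta'; auto.
  - intros j Hj. rewrite <- sumC_mull, completeness; auto.
Qed.

Lemma inner_ext_r n u v v' : (forall i, (i < n)%nat -> v i = v' i) -> inner n u v = inner n u v'.
Proof. intros H; unfold inner; apply sumC_ext; intros; rewrite H; auto. Qed.
Lemma inner_ext_l n u u' v : (forall i, (i < n)%nat -> u i = u' i) -> inner n u v = inner n u' v.
Proof. intros H; unfold inner; apply sumC_ext; intros; rewrite H; auto. Qed.

Lemma parseval d c w : orthonormal_basis d c ->
  norm2 d w = sumR d (fun k => Cnorm2 (inner d (c k) w)).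
Proof.
  intros Hc. rewrite norm2_inner.
  rewrite (inner_ext_r d w w (LC d (fun k => inner d (c k) w) c)).
  2:{ intros i Hi. unfold LC. apply expansion; auto. }
  rewrite inner_LC_r, Re_sumC. apply sumR_ext; intros k _.
  rewrite <- (inner_conj d (c k) w). unfold Cnorm2; simpl; ring.
Qed.

Lemma ON_norm1 d e k : orthonormal_basis d e -> (k < d)%nat -> norm2 d (e k) = 1.
Proof. intros He Hk. rewrite norm2_inner, He, Nat.eqb_refl; auto. Qed.

Section Psi.
Variables (dA dB : nat) (psi : nat -> nat -> Cpx).

Definition W (u : vec) : vec := fun b => sumC dA (fun a => Cmul (Cconj (u a)) (psi a b)).
Definition V (v : vec) : vec := fun a => sumC dB (fun b => Cmul (Cconj (v b)) (psi a b)).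

Lemma R1 u v : inner dA u (matvec dA (rhoA dB psi) v) = inner dB (W v) (W u).
Proof.
  unfold inner, matvec, rhoA, W.
  rewrite (sumC_ext dA _ (fun a => sumC dA (fun a' => sumC dB (fun b =>
     Cmul (Cconj (u a)) (Cmul (Cmul (psi a b) (Cconj (psi a' b))) (v a')))))).
  2:{ intros a _. rewrite sumC_mull. apply sumC_ext; intros a' _.
      rewrite sumC_mulr, sumC_mull. reflexivity. }
  rewrite (sumC_ext dB _ (fun b => sumC dA (fun a' => sumC dA (fun a =>
     Cmul (Cconj (u a)) (Cmul (Cmul (psi a b) (Cconj (psi a' b))) (v a')))))).
  2:{ intros b _. rewrite Cconj_sumC, sumC_prod. apply sumC_ext; intros a' _.
      apply sumC_ext; intros a _. Csolve. }
  rewrite (sumC_swap dB dA). rewrite sumC_swap.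
  apply sumC_ext; intros a1 _. rewrite (sumC_swap dB dA). reflexivity.
Qed.

Lemma alice_W c k : alice_dist dA dB psi c k = norm2 dB (W (c k)).
Proof. unfold alice_dist. rewrite R1, norm2_inner. reflexivity. Qed.

Lemma amp_A u v : amp dA dB psi u v = inner dB v (W u).
Proof.
  unfold amp, inner, W. rewrite sumC_swap. apply sumC_ext; intros b _.
  rewrite sumC_mull. apply sumC_ext; intros; Csolve.
Qed.
Lemma amp_B u v : amp dA dB psi u v = inner dA u (V v).
Proof.
  unfold amp, inner, V. apply sumC_ext; intros a _.
  rewrite sumC_mull. apply sumC_ext; intros; Csolve.
Qed.

Variables (e : nat -> vec) (lam : nat -> R).
Hypothesis Hspec : is_eigenbasis dA (rhoA dB psi) e lam.

Lemma eig_inner u l : (l < dA)%nat ->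
  inner dA u (matvec dA (rhoA dB psi) (e l)) = Cmul (RtoC (lam l)) (inner dA u (e l)).
Proof.
  intros Hl. destruct Hspec as [_ H].
  rewrite (inner_ext_r dA u _ (fun i => Cmul (RtoC (lam l)) (e l i))).
  2:{ intros; apply H; auto. }
  unfold inner. rewrite sumC_mull. apply sumC_ext; intros; Csolve.
Qed.

Definition G k := W (e k).

Lemma G_orth k l : (k < dA)%nat -> (l < dA)%nat ->
  inner dB (G k) (G l) = if Nat.eqb k l then RtoC (lam k) else C0.
Proof.
  intros Hk Hl. unfold G. rewrite <- R1, eig_inner; auto.
  destruct Hspec as [He _]. rewrite He; auto.
  destruct (Nat.eqb_spec l k); destruct (Nat.eqb_spec k l); subst; try lia; Csolve.
Qed.

Lemma lam_norm k : (k < dA)%nat -> lam k = norm2 dB (G k).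
Proof. intros Hk. rewrite norm2_inner, G_orth, Nat.eqb_refl; auto. Qed.
Lemma lam_nonneg k : (k < dA)%nat -> 0 <= lam k.
Proof. intros Hk; rewrite lam_norm; auto; apply norm2_nonneg. Qed.

Lemma W_LC u b : (b < dB)%nat ->
  W u b = LC dA (fun k => Cconj (inner dA (e k) u)) G b.
Proof.
  intros Hb. destruct Hspec as [He _]. unfold W, LC, G, W.
  rewrite (sumC_ext dA _ (fun a => sumC dA (fun k =>
     Cmul (Cconj (inner dA (e k) u)) (Cmul (Cconj (e k a)) (psi a b))))).
  2:{ intros a Ha. rewrite (expansion dA e u a He Ha) at 1.
      rewrite Cconj_sumC, sumC_mulr. apply sumC_ext; intros; Csolve. }
  rewrite sumC_swap. apply sumC_ext; intros. rewrite sumC_mull. reflexivity.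
Qed.

Lemma R4 u : norm2 dB (W u) = sumR dA (fun k => lam k * Cnorm2 (inner dA (e k) u)).
Proof.
  rewrite norm2_inner.
  rewrite (inner_ext_l dB _ (LC dA (fun k => Cconj (inner dA (e k) u)) G)).
  2:{ intros; apply W_LC; auto. }
  rewrite (inner_ext_r dB _ _ (LC dA (fun k => Cconj (inner dA (e k) u)) G)).
  2:{ intros; apply W_LC; auto. }
  rewrite inner_LC_l, Re_sumC. apply sumR_ext; intros k Hk.
  rewrite inner_LC_r.
  rewrite (sumC_ext dA _ (fun l => Cmul (Cmul (Cconj (inner dA (e l) u)) (RtoC (lam k)))
              (if Nat.eqb k l then RtoC 1 else C0))).
  2:{ intros l Hl. rewrite G_orth; auto. destruct (Nat.eqb_spec k l); subst; Csolve. }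
  rewrite sumC_delta'; auto. unfold Cnorm2; simpl; ring.
Qed.

End Psi.


Lemma ln2_pos : 0 < ln 2.
Proof. rewrite <- ln_1. apply ln_increasing; lra. Qed.

Lemma ln_le_sub1 y : 0 < y -> ln y <= y - 1.
Proof. intros Hy. pose proof (exp_ineq1_le (ln y)). rewrite exp_ln in H; lra. Qed.

Lemma ln_le_mono x y : 0 < x -> x <= y -> ln x <= ln y.
Proof. intros Hx Hxy. destruct (Req_dec x y). subst; lra. left; apply ln_increasing; lra. Qed.

Lemma xlog2_pos x : 0 < x -> xlog2 x = x * log2 x.
Proof. intros; unfold xlog2; destruct (Rle_dec x 0); lra. Qed.
Lemma xlog2_0 : xlog2 0 = 0.
Proof. unfold xlog2; destruct (Rle_dec 0 0); lra. Qed.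

Lemma tangent x q : 0 <= x -> 0 < q -> x * log2 q + (x - q) / ln 2 <= xlog2 x.
Proof.
  intros Hx Hq. pose proof ln2_pos. unfold log2.
  destruct (Req_dec x 0) as [->|Hx0].
  - rewrite xlog2_0. apply Rmult_le_reg_r with (ln 2); auto. field_simplify; lra.
  - rewrite xlog2_pos by lra. unfold log2.
    apply Rmult_le_reg_r with (ln 2); auto. field_simplify; [|lra..].
    assert (0 < x) by lra.
    pose proof (ln_le_sub1 (q / x) ltac:(apply Rdiv_lt_0_compat; lra)) as L.
    unfold Rdiv in L. rewrite ln_mult, ln_Rinv in L by (try apply Rinv_0_lt_compat; lra).
    assert (L2 : x * (ln q + - ln x) <= x * (q * / x - 1)) by (apply Rmult_le_compat_l; lra).
    replace (x * (q * / x - 1)) with (q - x) in L2 by (field; lra). nra.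
Qed.

Lemma jensen m (w x : nat -> R) :
  (forall k, (k < m)%nat -> 0 <= w k) -> (forall k, (k < m)%nat -> 0 <= x k) ->
  sumR m w <= 1 ->
  xlog2 (sumR m (fun k => w k * x k)) <= sumR m (fun k => w k * xlog2 (x k)).
Proof.
  intros Hw Hx Hs. set (q := sumR m (fun k => w k * x k)).
  assert (Hq : 0 <= q) by (apply sumR_nonneg; intros; apply Rmult_le_pos; auto).
  destruct (Req_dec q 0) as [Hq0|Hq0].
  - rewrite Hq0, xlog2_0. rewrite (sumR_ext _ _ (fun _ => 0)), sumR_zero; [lra|].
    intros k Hk. assert (w k * x k = 0).
    { apply (sumR_nonneg_zero m (fun k => w k * x k)); auto.
      intros; apply Rmult_le_pos; auto. }
    apply Rmult_integral in H. destruct H as [H|H]; rewrite H; [ring|rewrite xlog2_0; ring].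
  - assert (Hqp : 0 < q) by lra. pose proof ln2_pos.
    apply Rle_trans with (sumR m (fun k => w k * (x k * log2 q + (x k - q) / ln 2))).
    + assert (E : sumR m (fun k => w k * (x k * log2 q + (x k - q) / ln 2)) =
                  log2 q * q + / ln 2 * q + (- q / ln 2) * sumR m w).
      { rewrite (sumR_ext _ _ (fun k => (log2 q * (w k * x k) + / ln 2 * (w k * x k)) + (- q / ln 2) * w k)).
        2:{ intros; cbv beta; field; lra. }
        rewrite sumR_add, sumR_add, <- !sumR_scal. reflexivity. }
      rewrite E. rewrite xlog2_pos by auto.
      assert (0 <= / ln 2 * (q - q * sumR m w)).
      { apply Rmult_le_pos. left; apply Rinv_0_lt_compat; auto. nra. }
      unfold Rdiv in *. nra.
    + apply sumR_le; intros k Hk. apply Rmult_le_compat_l; auto. apply tangent; auto.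
Qed.

Lemma sub_additive n (x : nat -> R) : (forall j, (j < n)%nat -> 0 <= x j) ->
  sumR n (fun j => xlog2 (x j)) <= xlog2 (sumR n x).
Proof.
  intros Hx. set (s := sumR n x).
  assert (Hs : 0 <= s) by (apply sumR_nonneg; auto).
  assert (Hle : forall j, (j < n)%nat -> x j <= s).
  { intros j Hj. unfold s. clear s Hs. induction n; [lia|]. simpl.
    destruct (Nat.eq_dec j n).
    - subst. assert (0 <= sumR n x) by (apply sumR_nonneg; intros; apply Hx; lia). lra.
    - assert (x j <= sumR n x) by (apply IHn; intros; try apply Hx; lia).
      assert (0 <= x n) by (apply Hx; lia). lra. }
  destruct (Req_dec s 0) as [Hs0|Hs0].
  - rewrite Hs0, xlog2_0. rewrite (sumR_ext _ _ (fun _ => 0)), sumR_zero; [lra|].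
    intros j Hj. assert (x j = 0) by (pose proof (Hle j Hj); pose proof (Hx j Hj); lra).
    rewrite H, xlog2_0; auto.
  - rewrite xlog2_pos by lra. unfold s at 1. rewrite Rmult_comm, sumR_scal.
    apply sumR_le; intros j Hj. destruct (Req_dec (x j) 0) as [->|Hj0].
    + rewrite xlog2_0; lra.
    + rewrite xlog2_pos by (pose proof (Hx j Hj); lra). rewrite Rmult_comm.
      apply Rmult_le_compat_r; [pose proof (Hx j Hj); lra|].
      unfold log2. apply Rmult_le_compat_r.
      left; apply Rinv_0_lt_compat, ln2_pos.
      apply ln_le_mono; auto. pose proof (Hx j Hj); lra.
Qed.

Definition wt (M : nat -> nat -> R) (lam : nat -> R) j k :=
  if Rlt_dec 0 (lam k) then M j k / lam k else 0.

Lemma key (n m : nat) (M : nat -> nat -> R) (lam : nat -> R) :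
  (forall j k, (j < n)%nat -> (k < m)%nat -> 0 <= M j k) ->
  (forall k, (k < m)%nat -> 0 <= lam k) ->
  (forall k, (k < m)%nat -> sumR n (fun j => M j k) = lam k) ->
  (forall j, (j < n)%nat -> sumR m (fun k => wt M lam j k) <= 1) ->
  sumR n (fun j => xlog2 (sumR m (fun k => M j k))) <= sumR m (fun k => xlog2 (lam k)).
Proof.
  intros HM Hl Hc Hr.
  assert (HMw : forall j k, (j < n)%nat -> (k < m)%nat -> M j k = wt M lam j k * lam k).
  { intros j k Hj Hk. unfold wt. destruct (Rlt_dec 0 (lam k)).
    - field; lra.
    - assert (lam k = 0) by (pose proof (Hl k Hk); lra).
      rewrite <- (Hc k Hk) in H.
      assert (M j k = 0).
      { apply (sumR_nonneg_zero n (fun j => M j k)); [intros; apply HM; auto|exact H|exact Hj]. }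
      rewrite H0; ring. }
  assert (Hw : forall j k, (j < n)%nat -> (k < m)%nat -> 0 <= wt M lam j k).
  { intros j k Hj Hk. unfold wt. destruct (Rlt_dec 0 (lam k)); [|lra].
    unfold Rdiv; apply Rmult_le_pos; [apply HM; auto|left; apply Rinv_0_lt_compat; auto]. }
  apply Rle_trans with (sumR n (fun j => sumR m (fun k => wt M lam j k * xlog2 (lam k)))).
  - apply sumR_le; intros j Hj.
    rewrite (sumR_ext m _ (fun k => wt M lam j k * lam k)) by (intros; apply HMw; auto).
    apply jensen; auto.
  - rewrite sumR_swap. apply Req_le. apply sumR_ext; intros k Hk.
    rewrite (sumR_ext n _ (fun j => xlog2 (lam k) * wt M lam j k)) by (intros; cbv beta; ring).
    rewrite <- sumR_scal. unfold wt. destruct (Rlt_dec 0 (lam k)).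
    + rewrite (sumR_ext n _ (fun j => / lam k * M j k)) by (intros; cbv beta; unfold Rdiv; ring).
      rewrite <- sumR_scal, Hc; auto. field; lra.
    + assert (lam k = 0) by (pose proof (Hl k Hk); lra). rewrite H, xlog2_0. ring.
Qed.


Lemma inner_addl n u1 u2 w : inner n (fun i => Cadd (u1 i) (u2 i)) w = Cadd (inner n u1 w) (inner n u2 w).
Proof. unfold inner. rewrite <- sumC_add. apply sumC_ext; intros; Csolve. Qed.
Lemma inner_addr n u w1 w2 : inner n u (fun i => Cadd (w1 i) (w2 i)) = Cadd (inner n u w1) (inner n u w2).
Proof. unfold inner. rewrite <- sumC_add. apply sumC_ext; intros; Csolve. Qed.
Lemma inner_scall n c u w : inner n (fun i => Cmul c (u i)) w = Cmul (Cconj c) (inner n u w).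
Proof. unfold inner. rewrite sumC_mull. apply sumC_ext; intros; Csolve. Qed.
Lemma inner_scalr n c u w : inner n u (fun i => Cmul c (w i)) = Cmul c (inner n u w).
Proof. unfold inner. rewrite sumC_mull. apply sumC_ext; intros; Csolve. Qed.

Lemma bessel n m (G : nat -> vec) (lam : nat -> R) (v : vec) :
  (forall k l, (k < m)%nat -> (l < m)%nat ->
     inner n (G k) (G l) = if Nat.eqb k l then RtoC (lam k) else C0) ->
  sumR m (fun k => if Rlt_dec 0 (lam k) then Cnorm2 (inner n (G k) v) / lam k else 0)
  <= norm2 n v.
Proof.
  intros HG.
  set (x := fun k => if Rlt_dec 0 (lam k) then Cmul (RtoC (/ lam k)) (inner n (G k) v) else C0).
  set (T := LC m x G).
  set (S := sumR m (fun k => if Rlt_dec 0 (lam k) then Cnorm2 (inner n (G k) v) / lam k else 0)).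
  set (r := fun i => Cadd (v i) (Cmul (RtoC (-1)) (T i))).
  assert (HTv : Re (inner n T v) = S).
  { unfold T. rewrite inner_LC_l, Re_sumC. apply sumR_ext; intros k Hk. unfold x.
    destruct (Rlt_dec 0 (lam k)); [|simpl; ring]. unfold Cnorm2; simpl; field; lra. }
  assert (HvT : Re (inner n v T) = S).
  { rewrite <- inner_conj. simpl. exact HTv. }
  assert (HTT : Re (inner n T T) = S).
  { unfold T at 1. rewrite inner_LC_l, Re_sumC. apply sumR_ext; intros k Hk.
    unfold T. rewrite inner_LC_r.
    rewrite (sumC_ext m _ (fun l => Cmul (Cmul (x l) (RtoC (lam k))) (if Nat.eqb k l then RtoC 1 else C0))).
    2:{ intros l Hl. rewrite HG; auto. destruct (Nat.eqb_spec k l); subst; Csolve. }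
    rewrite sumC_delta'; auto. unfold x.
    destruct (Rlt_dec 0 (lam k)); [|simpl; ring]. unfold Cnorm2; simpl; field; lra. }
  assert (Hr : 0 <= norm2 n r) by apply norm2_nonneg.
  rewrite norm2_inner in Hr. unfold r in Hr.
  rewrite inner_addl, !inner_addr, !inner_scall, !inner_scalr in Hr.
  rewrite norm2_inner. simpl in Hr. simpl in HTv, HvT, HTT.
  fold S. nra.
Qed.


Definition std (k : nat) : vec := fun i => if Nat.eqb k i then RtoC 1 else C0.

Lemma inner_std_l n k g : (k < n)%nat -> inner n (std k) g = g k.
Proof.
  intros Hk. unfold inner.
  rewrite (sumC_ext n _ (fun i => Cmul (g i) (if Nat.eqb k i then RtoC 1 else C0))).
  - apply sumC_delta'; auto.
  - intros i _. unfold std. destruct (Nat.eqb k i); Csolve.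
Qed.
Lemma inner_std_r n k g : (k < n)%nat -> inner n g (std k) = Cconj (g k).
Proof. intros Hk. rewrite <- inner_conj, inner_std_l; auto. Qed.
Lemma std_ON n : orthonormal_basis n std.
Proof.
  intros k l Hk Hl. rewrite inner_std_l; auto. unfold std.
  rewrite Nat.eqb_sym. reflexivity.
Qed.

Lemma inner_self n w : inner n w w = RtoC (norm2 n w).
Proof.
  apply Cext. rewrite norm2_inner; reflexivity.
  unfold inner. rewrite Im_sumC. simpl. rewrite (sumR_ext _ _ (fun _ => 0)).
  rewrite sumR_zero; auto. intros; simpl; ring.
Qed.

Definition hh (w : vec) (c : R) (k : nat) : vec :=
  fun i => Cadd (std k i) (Cmul (Cmul (RtoC (- c)) (Cconj (w k))) (w i)).

Lemma hh_ON n w : 0 < norm2 n w -> orthonormal_basis n (hh w (2 / norm2 n w)).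
Proof.
  intros HN k l Hk Hl. unfold hh.
  rewrite inner_addl, !inner_addr, !inner_scall, !inner_scalr.
  rewrite inner_std_l, inner_std_l, inner_std_r, inner_self; auto.
  set (N := norm2 n w) in *.
  unfold std. rewrite (Nat.eqb_sym l k). destruct (Nat.eqb k l); apply Cext; simpl; field; lra.
Qed.

Lemma house n (g : vec) : (0 < n)%nat -> exists v : nat -> vec,
  orthonormal_basis n v /\ forall j, (0 < j)%nat -> (j < n)%nat -> inner n (v j) g = C0.
Proof.
  intros Hn.
  destruct (Req_dec (norm2 n g) 0) as [Hg0|Hg0].
  - exists std. split; [apply std_ON|]. intros j _ Hj. rewrite inner_std_l; auto.
    apply Cnorm2_zero. apply (sumR_nonneg_zero n (fun i => Cnorm2 (g i))); auto.
    intros; apply Cnorm2_nonneg.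
  - assert (Hg : 0 < norm2 n g) by (pose proof (norm2_nonneg n g); lra).
    set (t := sqrt (norm2 n g)).
    assert (Ht : 0 < t) by (apply sqrt_lt_R0; auto).
    assert (Htt : t * t = norm2 n g) by (apply sqrt_sqrt; lra).
    set (a := sqrt (Cnorm2 (g 0%nat))).
    assert (Ha : 0 <= a) by apply sqrt_pos.
    assert (Haa : a * a = Cnorm2 (g 0%nat)) by (apply sqrt_sqrt, Cnorm2_nonneg).
    clearbody a.
    set (beta := if Rlt_dec 0 a then mkC (t * Re (g 0%nat) / a) (t * Im (g 0%nat) / a) else mkC t 0).
    set (w := fun i => Cadd (g i) (Cmul beta (std 0 i))).
    assert (Hbg : Cmul (Cconj beta) (g 0%nat) = RtoC (t * a)).
    { unfold beta. destruct (Rlt_dec 0 a).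
      - unfold Cnorm2 in Haa. apply Cext; simpl; field_simplify; try lra.
        replace (t * Re (g 0%nat) ^ 2 + t * Im (g 0%nat) ^ 2) with (t * (a * a)) by (rewrite Haa; ring). field; lra.
      - assert (a = 0) by lra. assert (Cnorm2 (g 0%nat) = 0) by nra.
        rewrite (Cnorm2_zero _ H0). subst a. apply Cext; simpl; ring. }
    assert (Hbb : Re (Cmul beta (Cconj beta)) = t * t).
    { unfold beta. destruct (Rlt_dec 0 a).
      - unfold Cnorm2 in Haa. simpl. field_simplify; try lra.
        replace (t ^ 2 * Re (g 0%nat) ^ 2 + t ^ 2 * Im (g 0%nat) ^ 2) with (t ^ 2 * (a * a)) by (rewrite Haa; ring). field; lra.
      - simpl; ring. }
    assert (Hwg : inner n w g = RtoC (t * t + t * a)).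
    { unfold w. rewrite inner_addl, inner_scall, inner_std_l, inner_self, Hbg; auto.
      rewrite Htt. Csolve. }
    assert (HN : norm2 n w = 2 * (t * t + t * a)).
    { rewrite norm2_inner.
      replace (inner n w w) with (inner n w (fun i => Cadd (g i) (Cmul beta (std 0 i)))) by reflexivity.
      rewrite inner_addr, inner_scalr, Hwg, inner_std_r by auto.
      unfold w. unfold std. simpl Nat.eqb.
      pose proof (f_equal Re Hbg) as H1. simpl in H1, Hbb |- *. nra. }
    exists (hh w (2 / norm2 n w)). split.
    + apply hh_ON. rewrite HN. nra.
    + intros j Hj0 Hjn. unfold hh.
      rewrite inner_addl, inner_scall, inner_std_l, Hwg, HN by auto.
      unfold w. unfold std. destruct (Nat.eqb_spec 0 j); [lia|].
      apply Cext; simpl; field; nra.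
Qed.


Section Main.
Variables (dA dB : nat) (psi : nat -> nat -> Cpx).

Lemma part2 e lam (Hspec : is_eigenbasis dA (rhoA dB psi) e lam) c :
  orthonormal_basis dA c ->
  sumR dA (fun i => xlog2 (norm2 dB (W dA psi (c i)))) <= sumR dA (fun k => xlog2 (lam k)).
Proof.
  intros Hc. pose proof Hspec as [He _].
  rewrite (sumR_ext dA _ (fun i => xlog2 (sumR dA (fun k => lam k * Cnorm2 (inner dA (e k) (c i)))))).
  2:{ intros; rewrite (R4 dA dB psi e lam Hspec); auto. }
  apply key.
  - intros; apply Rmult_le_pos; [apply (lam_nonneg dA dB psi e lam Hspec); auto|apply Cnorm2_nonneg].
  - intros; apply (lam_nonneg dA dB psi e lam Hspec); auto.
  - intros k Hk. rewrite <- sumR_scal.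
    rewrite (sumR_ext dA _ (fun i => Cnorm2 (inner dA (c i) (e k)))) by (intros; apply Cnorm2_inner_sym).
    rewrite <- parseval, ON_norm1; auto. ring.
  - intros i Hi. apply Rle_trans with (sumR dA (fun k => Cnorm2 (inner dA (e k) (c i)))).
    + apply sumR_le; intros k Hk. unfold wt. destruct (Rlt_dec 0 (lam k)).
      * apply Req_le. field. lra.
      * apply Cnorm2_nonneg.
    + rewrite <- parseval, ON_norm1; auto. lra.
Qed.

Lemma bfirst e lam (Hspec : is_eigenbasis dA (rhoA dB psi) e lam) chi phi :
  valid_scheme dA dB (BFirst chi phi) ->
  sumR dB (fun j => sumR dA (fun i => xlog2 (Cnorm2 (amp dA dB psi (phi j i) (chi j)))))
  <= sumR dA (fun k => xlog2 (lam k)).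
Proof.
  intros [Hchi Hphi]. pose proof Hspec as [He _].
  apply Rle_trans with (sumR dB (fun j => xlog2 (sumR dA (fun k => Cnorm2 (inner dB (chi j) (G dA psi e k)))))).
  - apply sumR_le; intros j Hj.
    eapply Rle_trans. apply sub_additive. intros; apply Cnorm2_nonneg.
    apply Req_le. f_equal.
    rewrite (sumR_ext dA _ (fun i => Cnorm2 (inner dA (phi j i) (V dB psi (chi j))))) by (intros; rewrite amp_B; auto).
    rewrite <- parseval by auto. rewrite (parseval dA e) by auto.
    apply sumR_ext; intros k Hk. unfold G. rewrite <- amp_A, amp_B. reflexivity.
  - apply key.
    + intros; apply Cnorm2_nonneg.
    + intros; apply (lam_nonneg dA dB psi e lam Hspec); auto.
    + intros k Hk. rewrite <- parseval by auto. rewrite (lam_norm dA dB psi e lam Hspec); auto.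
    + intros j Hj. apply Rle_trans with (norm2 dB (chi j)).
      * eapply Rle_trans; [|apply (bessel dB dA (G dA psi e) lam (chi j))].
        -- apply Req_le. apply sumR_ext; intros k Hk. unfold wt.
           rewrite Cnorm2_inner_sym. reflexivity.
        -- intros; apply (G_orth dA dB psi e lam Hspec); auto.
      * rewrite ON_norm1; auto; lra.
Qed.

Lemma afirst e lam (Hspec : is_eigenbasis dA (rhoA dB psi) e lam) phi chi :
  valid_scheme dA dB (AFirst phi chi) ->
  sumR dA (fun i => sumR dB (fun j => xlog2 (Cnorm2 (amp dA dB psi (phi i) (chi i j)))))
  <= sumR dA (fun k => xlog2 (lam k)).
Proof.
  intros [Hphi Hchi].
  eapply Rle_trans; [|apply (part2 e lam Hspec phi Hphi)].
  apply sumR_le; intros i Hi.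
  eapply Rle_trans. apply sub_additive. intros; apply Cnorm2_nonneg.
  apply Req_le. f_equal.
  rewrite (parseval dB (chi i)) by auto.
  apply sumR_ext; intros; rewrite amp_A; auto.
Qed.

End Main.

Theorem mainTheorem1 (dA dB : nat) (psi : nat -> nat -> Cpx)
  (Hpsi : unit_state dA dB psi)
  (e : nat -> vec) (lam : nat -> R)
  (Hspec : is_eigenbasis dA (rhoA dB psi) e lam) :
  is_EMB dA dB psi (vN_entropy_of_spectrum dA lam) /\
  (forall c : nat -> vec, orthonormal_basis dA c ->
     shannon dA (alice_dist dA dB psi c) >= vN_entropy_of_spectrum dA lam) /\
  (forall (c : nat -> vec) (mu : nat -> R), is_eigenbasis dA (rhoA dB psi) c mu ->
     shannon dA (alice_dist dA dB psi c) = vN_entropy_of_spectrum dA lam).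
Proof.
  pose proof Hspec as [He _].
  assert (HdB : (0 < dB)%nat).
  { destruct dB; [|lia]. unfold unit_state in Hpsi. simpl in Hpsi.
    rewrite sumR_zero in Hpsi. lra. }
  assert (P2 : forall c, orthonormal_basis dA c ->
     shannon dA (alice_dist dA dB psi c) >= vN_entropy_of_spectrum dA lam).
  { intros c Hc. unfold shannon, vN_entropy_of_spectrum.
    rewrite (sumR_ext dA _ (fun i => xlog2 (norm2 dB (W dA psi (c i))))) by (intros; rewrite alice_W; auto).
    pose proof (part2 dA dB psi e lam Hspec c Hc). lra. }
  split; [|split; [exact P2|]].
  - split.
    + set (chi := fun i => proj1_sig (constructive_indefinite_description _
                     (house dB (G dA psi e i) HdB))).
      assert (Hchi : forall i, orthonormal_basis dB (chi i) /\
                 forall j, (0 < j)%nat -> (j < dB)%nat -> inner dB (chi i j) (G dA psi e i) = C0).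
      { intros i. unfold chi. destruct (constructive_indefinite_description _ _); simpl; auto. }
      exists (AFirst e chi). split.
      * split; auto. intros; apply Hchi.
      * unfold scheme_entropy, vN_entropy_of_spectrum. f_equal.
        apply sumR_ext; intros i Hi.
        destruct (Hchi i) as [Hon Hz].
        assert (Hsum : lam i = sumR dB (fun j => Cnorm2 (inner dB (chi i j) (G dA psi e i)))).
        { rewrite <- parseval by auto. apply (lam_norm dA dB psi e lam Hspec); auto. }
        rewrite (sumR_single dB _ 0) in Hsum; auto.
        2:{ intros j Hj Hj0. rewrite Hz by lia. unfold Cnorm2; simpl; ring. }
        rewrite (sumR_single dB _ 0); auto.
        -- rewrite amp_A. fold (G dA psi e i). rewrite <- Hsum. reflexivity.
        -- intros j Hj Hj0. rewrite amp_A. fold (G dA psi e i). rewrite Hz by lia.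
           unfold Cnorm2; simpl. replace (0 * 0 + 0 * 0) with 0 by ring. apply xlog2_0.
    + intros s Hs. destruct s as [phi chi|chi phi]; unfold scheme_entropy, vN_entropy_of_spectrum.
      * pose proof (afirst dA dB psi e lam Hspec phi chi Hs). lra.
      * pose proof (bfirst dA dB psi e lam Hspec chi phi Hs). lra.
  - intros c mu Hcm. pose proof Hcm as [Hc _].
    apply Rle_antisym; [|apply Rge_le, P2; auto].
    unfold shannon, vN_entropy_of_spectrum.
    rewrite (sumR_ext dA _ (fun i => xlog2 (mu i))).
    2:{ intros; rewrite alice_W, (lam_norm dA dB psi c mu Hcm); auto. }
    pose proof (part2 dA dB psi c mu Hcm e He).
    rewrite (sumR_ext dA (fun i => xlog2 (norm2 dB (W dA psi (e i)))) (fun i => xlog2 (lam i))) in H.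
    lra. intros; rewrite (lam_norm dA dB psi e lam Hspec); auto.
Qed.
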